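(* Let $K$ be a field with $\operatorname{char}(K)\neq2$. There is a functor $\mathcal{C}\colon\mathbf{BX}(\mathbf{LeibAlg}_K)\to\mathbf{BICat}(\mathbf{LeibAlg}_K)$ which sends a braided crossed module $\mathcal{X}=(M,N,(\cdot_1,\cdot_2),\partial,(\{-,-\},\langle-,-\rangle))$ to $\mathcal{C}_{\mathcal{X}}=(M\rtimes N,N,\bar s,\bar t,\bar e,\bar k,(\bar\tau,\bar\psi))$ with $\bar s(m,n)=n$, $\bar t(m,n)=\partial m+n$, $\bar e(n)=(0,n)$, $\bar k((m,n),(m',\partial m+n))=(m+m',n)$, $\bar\tau_{n,n'}=(-2\{n,n'\},[n,n'])$, $\bar\psi_{n,n'}=(-2\langle n,n'\rangle,[n,n'])$, and sends a homomorphism of braided crossed modules $(f_1,f_2)\colon\mathcal{X}\to\mathcal{X}'$ to $(f_1\times f_2,f_2)\colon\mathcal{C}_{\mathcal{X}}\to\mathcal{C}_{\mathcal{X}'}$, which is a braided internal functor.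
   Context: A Leibniz $K$-algebra: bilinear bracket with $[x,[y,z]]=[[x,y],z]-[[x,z],y]$. Leibniz action of $N$ on $M$: bilinear $\cdot_1\colon N\times M\to M$, $\cdot_2\colon M\times N\to M$ with $n\cdot_1[m,m']=[n\cdot_1m,m']-[n\cdot_1m',m]$; $[m,n\cdot_1m']=[m\cdot_2n,m']-[m,m']\cdot_2n$; $[m,m'\cdot_2n]=[m,m']\cdot_2n-[m\cdot_2n,m']$; $m\cdot_2[n,n']=(m\cdot_2n)\cdot_2n'-(m\cdot_2n')\cdot_2n$; $n\cdot_1(m\cdot_2n')=(n\cdot_1m)\cdot_2n'-[n,n']\cdot_1m$; $n\cdot_1(n'\cdot_1m)=[n,n']\cdot_1m-(n\cdot_1m)\cdot_2n'$. Semidirect product $M\rtimes N$: $M\times N$ with $[(m,n),(m',n')]=([m,m']+n\cdot_1m'+m\cdot_2n',[n,n'])$. Crossed module $(M,N,(\cdot_1,\cdot_2),\partial)$: action plus Leibniz homomorphism $\partial$ with $\partial(n\cdot_1m)=[n,\partial m]$, $\partial(m\cdot_2n)=[\partial m,n]$, $\partial(m)\cdot_1m'=[m,m']=m\cdot_2\partial(m')$. Braiding: bilinear $\{-,-\},\langle-,-\rangle\colon N\times N\to M$ with $\partial\{n,n'\}=[n,n']=\partial\langle n,n'\rangle$; $\{\partial m,\partial m'\}=[m,m']=\langle\partial m,\partial m'\rangle$; $\{\partial m,n\}=m\cdot_2n=\langle\partial m,n\rangle$; $\{n,\partial m\}=n\cdot_1m=\langle n,\partial m\rangle$; $\{n,[n',n'']\}=\{[n,n'],n''\}-\{[n,n''],n'\}$;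 $\langle n,[n',n'']\rangle=\{[n,n'],n''\}-\langle[n,n''],n'\rangle$; $\{n,[n',n'']\}=\{[n,n'],n''\}-\langle[n,n''],n'\rangle$; $\langle n,[n',n'']\rangle=\langle[n,n'],n''\rangle-\langle[n,n''],n'\rangle$. Homomorphism of braided crossed modules $(f_1,f_2)$: Leibniz homomorphisms $f_1\colon M\to M'$, $f_2\colon N\to N'$ with $f_1(n\cdot_1m)=f_2(n)*_1f_1(m)$, $f_1(m\cdot_2n)=f_1(m)*_2f_2(n)$, $\partial'f_1=f_2\partial$, $f_1\{n,n'\}=\{f_2n,f_2n'\}'$, $f_1\langle n,n'\rangle=\langle f_2n,f_2n'\rangle'$. These form $\mathbf{BX}(\mathbf{LeibAlg}_K)$. Categorical Leibniz algebra $(C_1,C_0,s,t,e,k)$: Leibniz homomorphisms $s,t\colon C_1\to C_0$, $e\colon C_0\to C_1$, $k\colon \{(x,y):t(x)=s(y)\}\to C_1$ forming an internal category ($se=te=\mathrm{Id}$, $sk(x,y)=s(x)$, $tk(x,y)=t(y)$, $k(es(x),x)=x=k(x,et(x))$, $k$ associative). Braiding: bilinear $\tau,\psi\colon C_0\times C_0\to C_1$ with $s(\tau_{a,b})=s(\psi_{a,b})=[a,b]$, $t(\tau_{a,b})=t(\psi_{a,b})=-[a,b]$; $k([x,y],\tau_{t x,t y})=k(\tau_{s x,s y},-[x,y])$ and likewise for $\psi$; $\tau_{a,[b,c]}=\tau_{[a,b],c}-\tau_{[a,c],b}$; $\psi_{a,[b,c]}=\tau_{[a,b],c}-\psi_{[a,c],b}$;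 $\tau_{a,[b,c]}=\tau_{[a,b],c}-\psi_{[a,c],b}$; $\psi_{a,[b,c]}=\psi_{[a,b],c}-\psi_{[a,c],b}$. Braided internal functor $(F_1,F_0)$: Leibniz homomorphisms commuting with $s,t,e,k$, with $F_1(\tau_{a,b})=\tau'_{F_0a,F_0b}$, $F_1(\psi_{a,b})=\psi'_{F_0a,F_0b}$. These form $\mathbf{BICat}(\mathbf{LeibAlg}_K)$. *)

(* Defs.v *)
From HB Require Import structures.
From mathcomp Require Import all_boot all_order all_algebra.
Set Implicit Arguments. Unset Strict Implicit. Unset Printing Implicit Defensive.
Import GRing.Theory.
Local Open Scope ring_scope.

Section Defs.
Variable K : fieldType.

Definition is_linear (A B : lmodType K) (f : A -> B) : Prop :=
  forall (a : K) x y, f (a *: x + y) = a *: f x + f y.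

Definition bilin (A B C : lmodType K) (f : A -> B -> C) : Prop :=
  (forall (a : K) x x' y, f (a *: x + x') y = a *: f x y + f x' y) /\
  (forall (a : K) x y y', f x (a *: y + y') = a *: f x y + f x y').

Definition is_leib (V : lmodType K) (br : V -> V -> V) : Prop :=
  bilin br /\
  forall x y z, br x (br y z) = br (br x y) z - br (br x z) y.

Definition is_lhom (V W : lmodType K) (brV : V -> V -> V) (brW : W -> W -> W)
  (f : V -> W) : Prop :=
  is_linear f /\ forall x y, f (brV x y) = brW (f x) (f y).

Definition is_action (M N : lmodType K) (brM : M -> M -> M) (brN : N -> N -> N)
  (a1 : N -> M -> M) (a2 : M -> N -> M) : Prop :=
  bilin a1 /\ bilin a2 /\
  (forall n m m', a1 n (brM m m') = brM (a1 n m) m' - brM (a1 n m') m) /\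
  (forall m n m', brM m (a1 n m') = brM (a2 m n) m' - a2 (brM m m') n) /\
  (forall m m' n, brM m (a2 m' n) = a2 (brM m m') n - brM (a2 m n) m') /\
  (forall m n n', a2 m (brN n n') = a2 (a2 m n) n' - a2 (a2 m n') n) /\
  (forall n m n', a1 n (a2 m n') = a2 (a1 n m) n' - a1 (brN n n') m) /\
  (forall n n' m, a1 n (a1 n' m) = a1 (brN n n') m - a2 (a1 n m) n').

Definition is_xmod (M N : lmodType K) (brM : M -> M -> M) (brN : N -> N -> N)
  (a1 : N -> M -> M) (a2 : M -> N -> M) (d : M -> N) : Prop :=
  is_leib brM /\ is_leib brN /\ is_action brM brN a1 a2 /\
  is_lhom brM brN d /\
  (forall n m, d (a1 n m) = brN n (d m)) /\
  (forall m n, d (a2 m n) = brN (d m) n) /\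
  (forall m m', a1 (d m) m' = brM m m') /\
  (forall m m', brM m m' = a2 m (d m')).

(** Braided crossed module (braiding {-,-} = cb, <-,-> = ab). *)
Definition is_bxmod (M N : lmodType K) (brM : M -> M -> M) (brN : N -> N -> N)
  (a1 : N -> M -> M) (a2 : M -> N -> M) (d : M -> N)
  (cb ab : N -> N -> M) : Prop :=
  is_xmod brM brN a1 a2 d /\
  bilin cb /\ bilin ab /\
  (forall n n', d (cb n n') = brN n n') /\
  (forall n n', d (ab n n') = brN n n') /\
  (forall m m', cb (d m) (d m') = brM m m') /\
  (forall m m', ab (d m) (d m') = brM m m') /\
  (forall m n, cb (d m) n = a2 m n) /\
  (forall m n, ab (d m) n = a2 m n) /\
  (forall n m, cb n (d m) = a1 n m) /\
  (forall n m, ab n (d m) = a1 n m) /\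
  (forall n n' n'', cb n (brN n' n'') = cb (brN n n') n'' - cb (brN n n'') n') /\
  (forall n n' n'', ab n (brN n' n'') = cb (brN n n') n'' - ab (brN n n'') n') /\
  (forall n n' n'', cb n (brN n' n'') = cb (brN n n') n'' - ab (brN n n'') n') /\
  (forall n n' n'', ab n (brN n' n'') = ab (brN n n') n'' - ab (brN n n'') n').

Definition is_bxhom (M N M' N' : lmodType K)
  (brM : M -> M -> M) (brN : N -> N -> N) (a1 : N -> M -> M) (a2 : M -> N -> M)
  (d : M -> N) (cb ab : N -> N -> M)
  (brM' : M' -> M' -> M') (brN' : N' -> N' -> N') (a1' : N' -> M' -> M')
  (a2' : M' -> N' -> M') (d' : M' -> N') (cb' ab' : N' -> N' -> M')
  (f1 : M -> M') (f2 : N -> N') : Prop :=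
  is_lhom brM brM' f1 /\ is_lhom brN brN' f2 /\
  (forall n m, f1 (a1 n m) = a1' (f2 n) (f1 m)) /\
  (forall m n, f1 (a2 m n) = a2' (f1 m) (f2 n)) /\
  (forall m, d' (f1 m) = f2 (d m)) /\
  (forall n n', f1 (cb n n') = cb' (f2 n) (f2 n')) /\
  (forall n n', f1 (ab n n') = ab' (f2 n) (f2 n')).

(** The composition k is defined on the
    pullback {(x,y) | t x = s y}; it is represented by a total function of
    which only the values on composable pairs matter. *)
Definition is_bicat (C1 C0 : lmodType K) (br1 : C1 -> C1 -> C1)
  (br0 : C0 -> C0 -> C0) (s t : C1 -> C0) (e : C0 -> C1) (k : C1 -> C1 -> C1)
  (tau psi : C0 -> C0 -> C1) : Prop :=
  is_leib br1 /\ is_leib br0 /\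
  is_lhom br1 br0 s /\ is_lhom br1 br0 t /\ is_lhom br0 br1 e /\
  (forall (a : K) x y x' y', t x = s y -> t x' = s y' ->
      k (a *: x + x') (a *: y + y') = a *: k x y + k x' y') /\
  (forall x y x' y', t x = s y -> t x' = s y' ->
      k (br1 x x') (br1 y y') = br1 (k x y) (k x' y')) /\
  (forall a, s (e a) = a) /\ (forall a, t (e a) = a) /\
  (forall x y, t x = s y -> s (k x y) = s x) /\
  (forall x y, t x = s y -> t (k x y) = t y) /\
  (forall x, k (e (s x)) x = x) /\ (forall x, k x (e (t x)) = x) /\
  (forall x y z, t x = s y -> t y = s z -> k (k x y) z = k x (k y z)) /\
  bilin tau /\ bilin psi /\
  (forall a b, s (tau a b) = br0 a b) /\ (forall a b, s (psi a b) = br0 a b) /\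
  (forall a b, t (tau a b) = - br0 a b) /\ (forall a b, t (psi a b) = - br0 a b) /\
  (forall x y, k (br1 x y) (tau (t x) (t y)) = k (tau (s x) (s y)) (- br1 x y)) /\
  (forall x y, k (br1 x y) (psi (t x) (t y)) = k (psi (s x) (s y)) (- br1 x y)) /\
  (forall a b c, tau a (br0 b c) = tau (br0 a b) c - tau (br0 a c) b) /\
  (forall a b c, psi a (br0 b c) = tau (br0 a b) c - psi (br0 a c) b) /\
  (forall a b c, tau a (br0 b c) = tau (br0 a b) c - psi (br0 a c) b) /\
  (forall a b c, psi a (br0 b c) = psi (br0 a b) c - psi (br0 a c) b).

Definition is_bifun (C1 C0 D1 D0 : lmodType K)
  (br1 : C1 -> C1 -> C1) (br0 : C0 -> C0 -> C0) (s t : C1 -> C0) (e : C0 -> C1)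
  (k : C1 -> C1 -> C1) (tau psi : C0 -> C0 -> C1)
  (br1' : D1 -> D1 -> D1) (br0' : D0 -> D0 -> D0) (s' t' : D1 -> D0)
  (e' : D0 -> D1) (k' : D1 -> D1 -> D1) (tau' psi' : D0 -> D0 -> D1)
  (F1 : C1 -> D1) (F0 : C0 -> D0) : Prop :=
  is_lhom br1 br1' F1 /\ is_lhom br0 br0' F0 /\
  (forall x, s' (F1 x) = F0 (s x)) /\ (forall x, t' (F1 x) = F0 (t x)) /\
  (forall a, F1 (e a) = e' (F0 a)) /\
  (forall x y, t x = s y -> F1 (k x y) = k' (F1 x) (F1 y)) /\
  (forall a b, F1 (tau a b) = tau' (F0 a) (F0 b)) /\
  (forall a b, F1 (psi a b) = psi' (F0 a) (F0 b)).

Definition sd_br (M N : lmodType K) (brM : M -> M -> M) (brN : N -> N -> N)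
  (a1 : N -> M -> M) (a2 : M -> N -> M) (x y : M * N) : M * N :=
  (brM x.1 y.1 + a1 x.2 y.1 + a2 x.1 y.2, brN x.2 y.2).

Definition sbar (M N : lmodType K) (x : M * N) : N := x.2.
Definition tbar (M N : lmodType K) (d : M -> N) (x : M * N) : N := d x.1 + x.2.
Definition ebar (M N : lmodType K) (n : N) : M * N := (0, n).
Definition kbar (M N : lmodType K) (x y : M * N) : M * N := (x.1 + y.1, x.2).
Definition taubar (M N : lmodType K) (brN : N -> N -> N) (cb : N -> N -> M)
  (n n' : N) : M * N := ((- 2%:R : K) *: cb n n', brN n n').
Definition Cmor (M N M' N' : lmodType K) (f1 : M -> M') (f2 : N -> N')
  (x : M * N) : M' * N' := (f1 x.1, f2 x.2).

End Defs.

(* Main.v *)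
Require Import Defs.
From mathcomp Require Import all_boot all_order all_algebra.
Import GRing.Theory.
Local Open Scope ring_scope.
From Stdlib Require Import FunctionalExtensionality.
Set Implicit Arguments. Unset Strict Implicit.

Section Helpers.
Variable K : fieldType.

Lemma lin0 (A B : lmodType K) (f : A -> B) : is_linear f -> f 0 = 0.
Proof.
move=> H; apply: (addrI (f 0)); rewrite addr0.
have := H 1 0 0; rewrite !scale1r !addr0; by move=> <-.
Qed.
Lemma linD (A B : lmodType K) (f : A -> B) x y : is_linear f -> f (x + y) = f x + f y.
Proof. by move=> H; have := H 1 x y; rewrite !scale1r. Qed.
Lemma linZ (A B : lmodType K) (f : A -> B) a x : is_linear f -> f (a *: x) = a *: f x.
Proof. by move=> H; have := H a x 0; rewrite !addr0 (lin0 H) addr0. Qed.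
Lemma linN (A B : lmodType K) (f : A -> B) x : is_linear f -> f (- x) = - f x.
Proof. by move=> H; rewrite -scaleN1r linZ // scaleN1r. Qed.

Lemma bilL (A B C : lmodType K) (f : A -> B -> C) y : bilin f -> is_linear (f^~ y).
Proof. by case=> H _ a x x'; apply: H. Qed.
Lemma bilR (A B C : lmodType K) (f : A -> B -> C) x : bilin f -> is_linear (f x).
Proof. by case=> _ H a y y'; apply: H. Qed.

Lemma bDl (A B C : lmodType K) (f : A -> B -> C) x x' y : bilin f -> f (x + x') y = f x y + f x' y.
Proof. by case=> H _; have := H 1 x x' y; rewrite !scale1r. Qed.
Lemma bDr (A B C : lmodType K) (f : A -> B -> C) x y y' : bilin f -> f x (y + y') = f x y + f x y'.
Proof. by case=> _ H; have := H 1 x y y'; rewrite !scale1r. Qed.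
Lemma bZl (A B C : lmodType K) (f : A -> B -> C) a x y : bilin f -> f (a *: x) y = a *: f x y.
Proof. by move=> H; have := linZ a x (bilL y H). Qed.
Lemma bZr (A B C : lmodType K) (f : A -> B -> C) a x y : bilin f -> f x (a *: y) = a *: f x y.
Proof. by move=> H; have := linZ a y (bilR x H). Qed.
Lemma bNl (A B C : lmodType K) (f : A -> B -> C) x y : bilin f -> f (- x) y = - f x y.
Proof. by move=> H; have := linN x (bilL y H). Qed.
Lemma bNr (A B C : lmodType K) (f : A -> B -> C) x y : bilin f -> f x (- y) = - f x y.
Proof. by move=> H; have := linN y (bilR x H). Qed.
Lemma b0l (A B C : lmodType K) (f : A -> B -> C) y : bilin f -> f 0 y = 0.
Proof. by move=> H; have := lin0 (bilL y H). Qed.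
Lemma b0r (A B C : lmodType K) (f : A -> B -> C) x : bilin f -> f x 0 = 0.
Proof. by move=> H; have := lin0 (bilR x H). Qed.
End Helpers.

Lemma addr2 (V : zmodType) (a b x : V) : a = b -> a + x = b + x.
Proof. by move=> ->. Qed.

Ltac ac_solve :=
  rewrite ?opprD ?opprK ?addr0 ?add0r ?addrA;
  repeat match goal with
  | |- _ = _ => reflexivity
  | |- ?S + ?x = ?T =>
       (try rewrite [in RHS](addrC x)); do 30 (try rewrite [in RHS](addrAC _ x)); apply: addr2
  end.
Arguments bDl {K A B C f x x' y}. Arguments bDr {K A B C f x y y'}.
Arguments bZl {K A B C f a x y}. Arguments bZr {K A B C f a x y}.
Arguments bNl {K A B C f x y}. Arguments bNr {K A B C f x y}.
Arguments b0l {K A B C f y}. Arguments b0r {K A B C f x}.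
Arguments linD {K A B f x y}. Arguments linZ {K A B f a x}.
Arguments linN {K A B f x}. Arguments lin0 {K A B f}.
Lemma pext (A B : Type) (x y : A * B) : x.1 = y.1 -> x.2 = y.2 -> x = y.
Proof. by case: x; case: y => ? ? ? ? /= -> ->. Qed.
Section PairL.
Variables (K : fieldType) (M N : lmodType K).
Lemma pZ1 (a : K) (x : M * N) : (a *: x).1 = a *: x.1. Proof. by []. Qed.
Lemma pZ2 (a : K) (x : M * N) : (a *: x).2 = a *: x.2. Proof. by []. Qed.
Lemma pD1 (x y : M * N) : (x + y).1 = x.1 + y.1. Proof. by []. Qed.
Lemma pD2 (x y : M * N) : (x + y).2 = x.2 + y.2. Proof. by []. Qed.
Lemma pN1 (x : M * N) : (- x).1 = - x.1. Proof. by []. Qed.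
Lemma pN2 (x : M * N) : (- x).2 = - x.2. Proof. by []. Qed.
Lemma p01 : (0 : M * N).1 = 0. Proof. by []. Qed.
Lemma p02 : (0 : M * N).2 = 0. Proof. by []. Qed.
End PairL.
Ltac exx := repeat (first [ progress cbn [fst snd] | progress rewrite ?add0r ?addr0 ?pZ1 ?pZ2 ?pD1 ?pD2 ?pN1 ?pN2 ?p01 ?p02 ?scalerDr ?scalerN ?scaleNr ?scaler0 ?oppr0 ?opprK
  | match goal with H : bilin _ |- _ => progress rewrite ?(bDl H) ?(bDr H) ?(bZl H) ?(bZr H) ?(bNl H) ?(bNr H) ?(b0l H) ?(b0r H) end
  | match goal with H : is_linear _ |- _ => progress rewrite ?(linD H) ?(linZ H) ?(linN H) ?(lin0 H) end ]).
Lemma part1 (K : fieldType) (M N : lmodType K) (brM : M -> M -> M) (brN : N -> N -> N)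
     (a1 : N -> M -> M) (a2 : M -> N -> M) (d : M -> N) (cb ab : N -> N -> M) :
     is_bxmod brM brN a1 a2 d cb ab ->
     is_bicat (sd_br brM brN a1 a2) brN (@sbar K M N) (tbar d) (@ebar K M N)
       (@kbar K M N) (taubar brN cb) (taubar brN ab).
Proof.
move=> [[[HbM LM] [[HbN LN] [[Hb1 [Hb2 [X3 [X4 [X5 [X6 [X7 X8]]]]]]] [[Hdl Hdb] [Hd1 [Hd2 [Hd3 Hd4]]]]]]]
  [Hcb [Hab [Hdcb [Hdab [Hcbd [Habd [Hcbdl [Habdl [Hcbdr [Habdr [B1 [B2 [B3 B4]]]]]]]]]]]]]].
rewrite /is_bicat /sd_br /sbar /tbar /ebar /kbar /taubar.
repeat split.
- move=> a [m n] [m' n'] [m'' n'']; rewrite /=; congr (_,_); exx; ac_solve.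
- move=> a [m n] [m' n'] [m'' n'']; rewrite /=; congr (_,_); exx; ac_solve.
- move=> [m n] [m' n'] [m'' n'']; rewrite /=; congr (_,_); exx; last exact: LN.
  rewrite [in LHS]LM [in LHS]X4 [in LHS]X5 [in LHS]X3 [in LHS]X8 [in LHS]X7 [in LHS]X6; ac_solve.
- exact: HbN.1.
- exact: HbN.2.
- exact: LN.
- move=> a [m n] [m' n']; exx; ac_solve.
- move=> [m n] [m' n']; exx; rewrite Hdb Hd1 Hd2; ac_solve.
- move=> a x y; apply: pext; exx; ac_solve.
- move=> x y; apply: pext; exx; done.
- move=> a [m n] [m' n'] [m'' n''] [m3 n3] _ _; apply: pext; exx; ac_solve.
- move=> [m n] [m' n'] [p q] [p' q'] /= E E'; apply: pext; exx => //.
  rewrite -E -E'; exx; rewrite Hd3 -Hd4; ac_solve.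
- move=> a; exx; done.
- move=> [m n] [p q] /= E; exx; rewrite -E; ac_solve.
- move=> [m n]; apply: pext; exx; done.
- move=> [m n]; apply: pext; exx; done.
- move=> [m n] [m' n'] [m'' n''] _ _; apply: pext; exx; ac_solve.
all: try (move=> a x x' y; apply: pext; exx; rewrite ?scalerA ?(mulrC a); ac_solve).
- move=> a b; exx; rewrite Hdcb scaler_nat mulr2n opprD addrNK //.
- move=> a b; exx; rewrite Hdab scaler_nat mulr2n opprD addrNK //.
- move=> [m n] [m' n']; apply: pext; cbn [fst snd] => //.
  set B := (brM m m' + a1 n m' + a2 m n').
  have h : cb (d m + n) (d m' + n') = B + cb n n' by rewrite /B; exx; rewrite Hcbd Hcbdl Hcbdr; ac_solve.
  clearbody B.
  rewrite h pN1 /= scalerDr scaleNr !scaler_nat !mulr2n opprD !addrA subrr add0r; ac_solve.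
- move=> [m n] [m' n']; apply: pext; cbn [fst snd] => //.
  set B := (brM m m' + a1 n m' + a2 m n').
  have h : ab (d m + n) (d m' + n') = B + ab n n' by rewrite /B; exx; rewrite Habd Habdl Habdr; ac_solve.
  clearbody B.
  rewrite h pN1 /= scalerDr scaleNr !scaler_nat !mulr2n opprD !addrA subrr add0r; ac_solve.
- move=> a b c; apply: pext; cbn [fst snd]; rewrite ?pD1 ?pD2 ?pN1 ?pN2 /=; [rewrite [in LHS]B1 | rewrite [in LHS]LN]; exx; ac_solve.
- move=> a b c; apply: pext; cbn [fst snd]; rewrite ?pD1 ?pD2 ?pN1 ?pN2 /=; [rewrite [in LHS]B2 | rewrite [in LHS]LN]; exx; ac_solve.
- move=> a b c; apply: pext; cbn [fst snd]; rewrite ?pD1 ?pD2 ?pN1 ?pN2 /=; [rewrite [in LHS]B3 | rewrite [in LHS]LN]; exx; ac_solve.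
- move=> a b c; apply: pext; cbn [fst snd]; rewrite ?pD1 ?pD2 ?pN1 ?pN2 /=; [rewrite [in LHS]B4 | rewrite [in LHS]LN]; exx; ac_solve.
Qed.

Lemma part2 (K : fieldType) (M N M' N' : lmodType K)
     (brM : M -> M -> M) (brN : N -> N -> N) (a1 : N -> M -> M)
     (a2 : M -> N -> M) (d : M -> N) (cb ab : N -> N -> M)
     (brM' : M' -> M' -> M') (brN' : N' -> N' -> N') (a1' : N' -> M' -> M')
     (a2' : M' -> N' -> M') (d' : M' -> N') (cb' ab' : N' -> N' -> M')
     (f1 : M -> M') (f2 : N -> N') :
     is_bxhom brM brN a1 a2 d cb ab brM' brN' a1' a2' d' cb' ab' f1 f2 ->
     is_bifun (sd_br brM brN a1 a2) brN (@sbar K M N) (tbar d) (@ebar K M N)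
       (@kbar K M N) (taubar brN cb) (taubar brN ab)
       (sd_br brM' brN' a1' a2') brN' (@sbar K M' N') (tbar d') (@ebar K M' N')
       (@kbar K M' N') (taubar brN' cb') (taubar brN' ab')
       (Cmor f1 f2) f2.
Proof.
move=> [[Lf1 Hf1] [[Lf2 Hf2] [F1 [F2 [F3 [F4 F5]]]]]].
rewrite /is_bifun /sd_br /sbar /tbar /ebar /kbar /taubar /Cmor.
split; [split|split; [by split|split; [by []|split]]].
- move=> a [m n] [m' n']; apply: pext; exx; done.
- move=> [m n] [m' n']; apply: pext; cbn [fst snd]; [exx; rewrite Hf1 F1 F2 // | exact: Hf2].
- move=> [m n] /=; rewrite F3; exx; done.
split; [move=> a; apply: pext; exx; done|split].
- move=> [m n] [p q] _; apply: pext; exx; done.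
split.
- move=> a b; apply: pext; cbn [fst snd]; [exx; rewrite F4 // | exact: Hf2].
- move=> a b; apply: pext; cbn [fst snd]; [exx; rewrite F5 // | exact: Hf2].
Qed.

Unset Implicit Arguments. Set Strict Implicit.

Theorem mainTheorem3 (K : fieldType) (hK : ~~ (2%N \in [pchar K])) :
  (* object part: C_X is a braided categorical Leibniz algebra *)
  (forall (M N : lmodType K) (brM : M -> M -> M) (brN : N -> N -> N)
     (a1 : N -> M -> M) (a2 : M -> N -> M) (d : M -> N) (cb ab : N -> N -> M),
     is_bxmod brM brN a1 a2 d cb ab ->
     is_bicat (sd_br brM brN a1 a2) brN (@sbar K M N) (tbar d) (@ebar K M N)
       (@kbar K M N) (taubar brN cb) (taubar brN ab)) /\
  (* morphism part: (f1 x f2, f2) is a braided internal functor *)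
  (forall (M N M' N' : lmodType K)
     (brM : M -> M -> M) (brN : N -> N -> N) (a1 : N -> M -> M)
     (a2 : M -> N -> M) (d : M -> N) (cb ab : N -> N -> M)
     (brM' : M' -> M' -> M') (brN' : N' -> N' -> N') (a1' : N' -> M' -> M')
     (a2' : M' -> N' -> M') (d' : M' -> N') (cb' ab' : N' -> N' -> M')
     (f1 : M -> M') (f2 : N -> N'),
     is_bxmod brM brN a1 a2 d cb ab ->
     is_bxmod brM' brN' a1' a2' d' cb' ab' ->
     is_bxhom brM brN a1 a2 d cb ab brM' brN' a1' a2' d' cb' ab' f1 f2 ->
     is_bifun (sd_br brM brN a1 a2) brN (@sbar K M N) (tbar d) (@ebar K M N)
       (@kbar K M N) (taubar brN cb) (taubar brN ab)
       (sd_br brM' brN' a1' a2') brN' (@sbar K M' N') (tbar d') (@ebar K M' N')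
       (@kbar K M' N') (taubar brN' cb') (taubar brN' ab')
       (Cmor f1 f2) f2) /\
  (* functoriality: identities and composites are preserved *)
  (forall (M N : lmodType K), Cmor (@id M) (@id N) = id) /\
  (forall (M N M' N' M'' N'' : lmodType K) (f1 : M -> M') (f2 : N -> N')
     (g1 : M' -> M'') (g2 : N' -> N''),
     Cmor (g1 \o f1) (g2 \o f2) = Cmor g1 g2 \o Cmor f1 f2).
Proof.
split; first by move=> *; apply: part1.
split; first by move=> M N M' N' brM brN a1 a2 d cb ab brM' brN' a1' a2' d' cb' ab' f1 f2 _ _; apply: part2.
split.
- move=> M N; apply: functional_extensionality => -[m n]; by [].
- by [].
Qed.
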